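(* Let $\mathcal{G}$ be the complete digraph on $n$ nodes (all ordered pairs $(i,j)$, including $i=j$, are edges), and let $\tau\in\mathbb{Z}_{>0}$ with $\tau\le n$ and $\tau$ dividing $n$. Let $\Pi_0\in\mathbb{R}^{\tau\times\tau}$ be any irreducible permutation matrix, and set $P^*=\Pi_0\otimes \frac{\tau}{n}\mathbb{1}_{n/\tau}\mathbb{1}_{n/\tau}^\top$. Then $P^*$ is an optimal solution of the problem of maximizing $\min_{i,j}\mathbb{P}(T_{ij}(P)\le\tau)$ over all row-stochastic $P\in\mathbb{R}^{n\times n}$ with nonnegative entries, and $\min_{i,j}\mathbb{P}(T_{ij}(P^* )\le\tau)=\frac{\tau}{n}$.
   Context: For a Markov chain $(X_k)_{k\ge0}$ with transition matrix $P$, $T_{ij}=\min\{k\ge1: X_k=j\}$ given $X_0=i$. $\otimes$ denotes the Kronecker product and $\mathbb{1}_m$ the all-ones column vector in $\mathbb{R}^m$. *)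

(* Defs.v *)
From mathcomp Require Import all_boot all_order all_algebra all_fingroup.
From mathcomp Require Export mxtens.
Set Implicit Arguments. Unset Strict Implicit. Unset Printing Implicit Defensive.
Import Order.TTheory GRing.Theory Num.Theory.
Local Open Scope ring_scope.

Definition row_stochastic (R : realFieldType) n (P : 'M[R]_n) : Prop :=
  (forall i j, 0 <= P i j) /\ (forall i, \sum_(j < n) P i j = 1).

(* first-passage probabilities: fpass P k i j = P(T_ij = k) for k >= 1,
   T_ij = min{k >= 1 : X_k = j} given X_0 = i (first-step analysis):
   P(T_ij = 1) = P_ij, P(T_ij = k+1) = sum_{l <> j} P_il P(T_lj = k). *)
Fixpoint fpass (R : realFieldType) n (P : 'M[R]_n) (k : nat) (i j : 'I_n) : R :=
  match k with
  | 0 => 0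
  | 1 => P i j
  | k'.+1 => \sum_(l < n | l != j) P i l * fpass P k' l j
  end.

Definition hit_le (R : realFieldType) n (P : 'M[R]_n) (t : nat) (i j : 'I_n) : R :=
  \sum_(1 <= k < t.+1) fpass P k i j.

(* min_{i,j} P(T_ij <= t).  All these values lie in [0,1] for a stochastic P,
   so using 1 as the neutral element of min gives exactly the minimum
   (the index set is nonempty). *)
Definition min_hit (R : realFieldType) n (P : 'M[R]_n) (t : nat) : R :=
  \big[Num.min/1]_(i < n) \big[Num.min/1]_(j < n) hit_le P t i j.

Definition irreducible_mx (R : realFieldType) n (A : 'M[R]_n) : Prop :=
  forall i j : 'I_n, exists k : nat, 0 < (A ^+ k) i j.

Definition is_perm_matrix (R : realFieldType) n (A : 'M[R]_n) : Prop :=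
  exists s : 'S_n, A = perm_mx s.

Definition Pstar (R : realFieldType) (tau m : nat) (Pi0 : 'M[R]_tau) : 'M[R]_(tau * m) :=
  tensmx Pi0 ((tau%:R / (tau * m)%:R) *: ((const_mx 1 : 'cV[R]_m) *m (const_mx 1 : 'cV[R]_m)^T)).

(* Main.v *)
Require Import Defs.
From mathcomp Require Import all_boot all_order all_algebra all_fingroup.
From mathcomp Require Import mxtens.
From mathcomp Require Import reals.
From mathcomp Require Import ring.
Import Order.TTheory GRing.Theory Num.Theory.
Local Open Scope ring_scope.
Set Implicit Arguments. Unset Strict Implicit.

Lemma fpassSS (R : realFieldType) n (P : 'M[R]_n) k i j :
  fpass P k.+2 i j = \sum_(l < n | l != j) P i l * fpass P k.+1 l j.
Proof. by []. Qed.

Lemma fpass_ge0 (R : realFieldType) n (P : 'M[R]_n) k i j :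
  row_stochastic P -> 0 <= fpass P k i j.
Proof.
move=> [P0 _]; elim: k i j => [//|[|k] IH] i j; first exact: P0.
rewrite fpassSS; apply: sumr_ge0 => l _; apply: mulr_ge0 => //; exact: IH.
Qed.

Lemma sum_sub_le (R : realFieldType) n (F : 'I_n -> R) (p : pred 'I_n) :
  (forall l, 0 <= F l) -> \sum_(l | p l) F l <= \sum_l F l.
Proof.
move=> F0; rewrite [X in _ <= X](bigID p) /= lerDl; exact: sumr_ge0.
Qed.

Definition HH (R : realFieldType) n (P : 'M[R]_n) t i j :=
  \sum_(0 <= k < t) fpass P k.+1 i j.

Lemma HH_sum (R : realFieldType) n (P : 'M[R]_n) t i :
  row_stochastic P -> \sum_j HH P t i j <= t%:R.
Proof.
move=> PS; have [P0 P1] := PS.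
elim: t i => [|t IH] i.
  by rewrite big1 // => j _; rewrite /HH big_geq.
have step : forall j, HH P t.+1 i j <= P i j + \sum_l P i l * HH P t l j.
  move=> j; rewrite /HH big_nat_recl //=.
  rewrite lerD2l.
  under [X in _ <= X]eq_bigr do rewrite big_distrr /=.
  rewrite [X in _ <= X]exchange_big /=.
  apply: ler_sum => k _; rewrite -/(fpass P k.+1 _ j).
  apply: sum_sub_le => l; apply: mulr_ge0 => //. exact: (fpass_ge0 k.+1 l j PS).
apply: le_trans (ler_sum _ (fun j _ => step j)) _.
rewrite big_split /= P1 exchange_big /= -natr1 addrC lerD2r.
under eq_bigr do rewrite -big_distrr /=.
apply: le_trans (_ : \sum_l P i l * t%:R <= _).
  apply: ler_sum => l _; apply: ler_wpM2l => //; exact: IH.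
by rewrite -big_distrl /= P1 mul1r.
Qed.

Lemma hit_HH (R : realFieldType) n (P : 'M[R]_n) t i j :
  hit_le P t i j = HH P t i j.
Proof. by rewrite /hit_le /HH big_add1. Qed.

Lemma bigmin_le (R : realFieldType) n (F : 'I_n -> R) i :
  \big[Num.min/1]_(j < n) F j <= F i.
Proof. by rewrite (bigD1 i) //= ge_min lexx. Qed.

Lemma min_hit_le (R : realFieldType) n (P : 'M[R]_n) t :
  row_stochastic P -> (0 < n)%N -> min_hit P t <= t%:R / n%:R.
Proof.
move=> PS n0; pose i0 : 'I_n := Ordinal n0.
have n0' : 0 < n%:R :> R by rewrite ltr0n.
rewrite ler_pdivlMr //.
have -> : min_hit P t * n%:R = \sum_(j < n) min_hit P t.
  by rewrite sumr_const card_ord mulr_natr.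
apply: le_trans (HH_sum t i0 PS).
apply: ler_sum => j _; rewrite -hit_HH.
apply: le_trans (bigmin_le _ i0) _; exact: bigmin_le.
Qed.
Fixpoint hh (T : eqType) (f : T -> T) (k : nat) (a b : T) : bool :=
  if k is k'.+1 then (f a != b) && hh f k' (f a) b else f a == b.

Lemma hh_iter (T : eqType) (f : T -> T) k a b : hh f k a b -> iter k.+1 f a = b.
Proof.
elim: k a => [|k IH] a /=; first by move/eqP.
by case/andP=> _ /IH <-; rewrite -iterSr.
Qed.

Lemma hh_sum (R : realFieldType) (T : eqType) (f : T -> T) t a b :
  \sum_(0 <= k < t) ((hh f k a b)%:R : R) =
  (has (fun k => iter k.+1 f a == b) (iota 0 t))%:R.
Proof.
elim: t a => [|t IH] a; first by rewrite big_geq.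
rewrite big_nat_recl //= -[iota 1 t]/(iota (1 + 0) t) iotaDl has_map.
case: eqP => [E|NE] /=.
  by rewrite big1 ?addr0 // => k _ /=; rewrite E eqxx.
rewrite add0r (IH (f a)); congr (_ %:R); congr nat_of_bool; elim: (iota 0 t) => //= k s ->.
by rewrite add0n -iterSr.

Qed.

Lemma perm_mx_entry (R : realFieldType) n (s : 'S_n) a b :
  perm_mx s a b = (s a == b)%:R :> R.
Proof. by rewrite /perm_mx !mxE. Qed.

Lemma perm_mxX (R : realFieldType) n (s : 'S_n) k :
  (perm_mx s : 'M[R]_n) ^+ k = perm_mx (s ^+ k)%g.
Proof.
elim: k => [|k IH]; first by rewrite !expr0 perm_mx1.
by rewrite exprS expgS IH perm_mxM mulmxE.
Qed.

Lemma conn_all (R : realFieldType) n (s : 'S_n) :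
  irreducible_mx (perm_mx s : 'M[R]_n) -> forall a b, fconnect s a b.
Proof.
move=> Hirr a b; have [k] := Hirr a b.
rewrite perm_mxX perm_mx_entry permX; case: eqP => [<- _|]; last by rewrite ltxx.
exact: fconnect_iter.
Qed.

Lemma order_all n (s : 'S_n) a : (forall a b, fconnect s a b) -> fingraph.order s a = n.
Proof.
move=> C; rewrite /fingraph.order -[RHS]card_ord; apply: eq_card => b.
by rewrite !inE C.
Qed.
Definition blk tau m (x : 'I_(tau * m)) : 'I_tau := (mxtens_unindex x).1.

Lemma PstarE (R : realFieldType) tau m (s : 'S_tau) x y :
  Pstar m (perm_mx s : 'M[R]_tau) x y =
  (s (blk x) == blk y)%:R * (tau%:R / (tau * m)%:R).
Proof.
rewrite /Pstar /tensmx !mxE big_ord1 !mxE /blk.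
by rewrite !mulr1.
Qed.

Lemma cm1 (R : realFieldType) tau m : (0 < tau)%N -> (0 < m)%N ->
  (tau%:R / (tau * m)%:R) * m%:R = 1 :> R.
Proof.
move=> t0 m0; rewrite natrM.
have t0' : tau%:R != 0 :> R by rewrite pnatr_eq0 -lt0n.
have m0' : m%:R != 0 :> R by rewrite pnatr_eq0 -lt0n.
by field; rewrite t0' m0'.
Qed.

Lemma sum_blk (R : realFieldType) tau m (G : 'I_tau -> R) :
  \sum_(y < tau * m) G (blk y) = \sum_(c < tau) G c *+ m.
Proof.
rewrite (reindex (@mxtens_index tau m)) /=; last first.
  by exists (@mxtens_unindex tau m) => z _; [exact: mxtens_indexK | exact: mxtens_unindexK].
under eq_bigr do rewrite /blk mxtens_indexK.
transitivity (\sum_(c < tau) \sum_(r < m) G c).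
  by rewrite pair_big /=.
by apply: eq_bigr => c _; rewrite sumr_const card_ord.
Qed.

Lemma Pstar_row (R : realFieldType) tau m (s : 'S_tau) x :
  (0 < tau)%N -> (0 < m)%N ->
  \sum_y Pstar m (perm_mx s : 'M[R]_tau) x y = 1.
Proof.
move=> t0 m0.
under eq_bigr do rewrite PstarE.
rewrite (@sum_blk R tau m (fun b => (s (blk x) == b)%:R * (tau%:R / (tau * m)%:R))) (bigD1 (s (blk x))) //= eqxx mul1r big1 ?addr0.
  by rewrite -[_ *+ m]mulr_natr cm1.
by move=> c /negbTE; rewrite eq_sym => ->; rewrite mul0r mul0rn.
Qed.

Lemma fpass_Pstar (R : realFieldType) tau m (s : 'S_tau) :
  (0 < tau)%N -> (0 < m)%N -> (forall a b, fconnect s a b) ->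
  forall k, (k < tau)%N -> forall x y,
  fpass (Pstar m (perm_mx s : 'M[R]_tau)) k.+1 x y =
  (hh s k (blk x) (blk y))%:R * (tau%:R / (tau * m)%:R).
Proof.
move=> t0 m0 Hc; elim=> [|k IH] Hk x y.
  by rewrite /= PstarE.
rewrite fpassSS.
under eq_bigr => l _ do rewrite IH 1?ltnW //.
set P := Pstar m _; set c := (_ / _).
have E : forall l, P x l * ((hh s k (blk l) (blk y))%:R * c) =
                   P x l * ((hh s k (s (blk x)) (blk y))%:R * c).
  move=> l; rewrite /P PstarE; case: eqP => [->//|_]; by rewrite !mul0r.
under eq_bigr do rewrite E.
case: (eqVneq (s (blk x)) (blk y)) => [E1|N1].
  have Hf : hh s k (blk y) (blk y) = false.
    apply/negP => /hh_iter H.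
    have := @findex_iter _ s (blk y) k.+1; rewrite order_all // => /(_ Hk).
    by rewrite H findex0.
  rewrite /= E1 eqxx /= Hf mul0r big1 // => l _; by rewrite mulr0.
rewrite /= N1 /= -big_distrl /=.
have S1 : \sum_(l | l != y) P x l = 1.
  have S0 := Pstar_row R s x t0 m0.
  by rewrite (bigD1 y) //= PstarE (negbTE N1) mul0r add0r in S0.
by rewrite S1 mul1r.
Qed.

Lemma hit_Pstar (R : realFieldType) tau m (s : 'S_tau) :
  (0 < tau)%N -> (0 < m)%N -> (forall a b, fconnect s a b) -> forall x y,
  hit_le (Pstar m (perm_mx s : 'M[R]_tau)) tau x y = tau%:R / (tau * m)%:R.
Proof.
move=> t0 m0 Hc x y; rewrite hit_HH /HH.
under eq_big_nat => k /andP[_ Hk] do rewrite fpass_Pstar //.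
rewrite -big_distrl /= hh_sum.
have -> : has (fun k => iter k.+1 s (blk x) == blk y) (iota 0 tau).
  apply/hasP; exists (findex s (s (blk x)) (blk y)).
    rewrite mem_iota add0n /=; have := findex_max (Hc (s (blk x)) (blk y)).
    by rewrite order_all.
  by rewrite iterSr iter_findex.
by rewrite mul1r.
Qed.

Lemma bigmin_const (R : realFieldType) n (c : R) :
  (0 < n)%N -> c <= 1 -> \big[Num.min/1]_(i < n) c = c.
Proof.
elim: n => [//|[|n] IH] _ c1.
  by rewrite big_ord_recl big_ord0 min_l.
by rewrite big_ord_recl IH // minxx.
Qed.

Lemma min_hit_Pstar (R : realFieldType) tau m (s : 'S_tau) :
  (0 < tau)%N -> (0 < m)%N -> (forall a b, fconnect s a b) ->
  min_hit (Pstar m (perm_mx s : 'M[R]_tau)) tau = tau%:R / (tau * m)%:R.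
Proof.
move=> t0 m0 Hc; rewrite /min_hit.
have n0 : (0 < tau * m)%N by rewrite muln_gt0 t0.
have c1 : tau%:R / (tau * m)%:R <= 1 :> R.
  have : tau%:R / (tau * m)%:R * 1 <= tau%:R / (tau * m)%:R * m%:R :> R.
    apply: ler_wpM2l; first by apply: divr_ge0; rewrite ler0n.
    by rewrite ler1n.
  by rewrite mulr1 cm1.
under eq_bigr do under eq_bigr do rewrite hit_Pstar //.
by rewrite bigmin_const // bigmin_const.
Qed.

Unset Implicit Arguments. Set Strict Implicit.

Theorem lemma1 (R : realType) (tau m : nat) (Pi0 : 'M[R]_tau) :
  (0 < tau)%N -> (0 < m)%N ->
  is_perm_matrix Pi0 -> irreducible_mx Pi0 ->
  (forall P : 'M[R]_(tau * m), row_stochastic P ->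
     min_hit P tau <= min_hit (Pstar m Pi0) tau) /\
  min_hit (Pstar m Pi0) tau = tau%:R / (tau * m)%:R.
Proof.
move=> t0 m0 [s ->] Hirr.
have Hc := conn_all Hirr.
rewrite min_hit_Pstar //; split => // P PS.
apply: min_hit_le => //; by rewrite muln_gt0 t0.
Qed.
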